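(* Let $\mathcal{G}$ be a network of type $\mathcal{C}^1$ with exactly two stubborn agents $s_1,s_2$, whose opinions evolve by the Friedkin–Johnsen model $\mathbf{x}(k+1)=(I-\beta)W\mathbf{x}(k)+\beta\mathbf{x}(0)$, let $m$ be a global communicator, and let $\mathcal{T}_1,\dots,\mathcal{T}_4$ be defined relative to $m$. Let $(a,b,d)$ be a permissible non-redundant edge modification. (A) The modification increases the influence centrality $c_{s_1}$ if either C1: $a$ satisfies (i) $a\in\mathcal{T}_1$ and (ii) every simple path from $m$ to $a$ passes through $s_1$, while $d$ fails (i) or (ii) (or both) (i.e. $d\notin\mathcal{T}_1$, or some simple path from $m$ to $d$ avoids $s_1$); or C2: $a\in\mathcal{T}_4$ and $d\in\mathcal{T}_2$. (B) Symmetrically, the modification increases $c_{s_2}$ if either C1: $a\in\mathcal{T}_2$ and every simple path from $m$ to $a$ passes through $s_2$, while $d$ fails at least one of these two conditions (with $s_2,\mathcal{T}_2$ in place of $s_1,\mathcal{T}_1$); or C2: $a\in\mathcal{T}_4$ and $d\in\mathcal{T}_1$.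
   Context: Let $\mathcal{G}=(\mathcal{V},\mathcal{E})$, $\mathcal{V}=\{1,\dots,n\}$, be a directed graph, where an edge $(i,j)$ means information flows from $i$ to $j$. Its weighted adjacency matrix $W=[w_{ij}]$ is row-stochastic with $w_{ij}>0$ iff $(j,i)\in\mathcal{E}$ (self-loops allowed). In the Friedkin–Johnsen model, $\beta=\mathrm{diag}(\beta_1,\dots,\beta_n)$ with $\beta_i\in[0,1]$, and agent $i$ is stubborn if $\beta_i>0$. Here exactly two agents $s_1,s_2$ are stubborn, with $\beta_{s_1},\beta_{s_2}\in(0,1)$. The influence centrality vector is $\mathbf{c}=P^T\mathbb{1}_n/n$ with $P=(I_n-(I_n-\beta)W)^{-1}\beta$; $c_i$ is the influence centrality of agent $i$ (and $c_{s_1}+c_{s_2}=1$). ''Increases the influence centrality of $s_i$'' means $c_{s_i}$ is strictly larger after the modification. Type $\mathcal{C}^1$: $\mathcal{G}$ is strongly connected and some node $m$ belongs to every cycle of $\mathcal{G}$ other than self-loops; such an $m$ is a global communicator. Given a global communicator $m$, a direct path from $i$ to $j$ is a path from $i$ to $j$ that does not pass through $m$. The nodes are classified as: $\mathcal{T}_1$: nodes having a direct path from $s_1$ but not from $s_2$; $\mathcal{T}_2$: direct path from $s_2$ but not from $s_1$; $\mathcal{T}_3$: direct paths from both; $\mathcal{T}_4$: from neither. By convention $s_1\in\mathcal{T}_1$, $s_2\in\mathcal{T}_2$, $m\in\mathcal{T}_3$, except that if $s_1$ has a direct path to $s_2$ then $s_2$ and every node with a direct path from $s_2$ belong to $\mathcal{T}_3$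 (so $\mathcal{T}_2=\emptyset$). Edge modification $(a,b,d)$: for distinct nodes $a,b,d$ with $w_{bd}>0$ and some $0<w<w_{bd}$, replace $w_{ba}$ by $w_{ba}+w$ (adding edge $(a,b)$ if absent) and $w_{bd}$ by $w_{bd}-w$, so the in-degree (row sum) of $b$ is unchanged. It is permissible if the modified network is still of type $\mathcal{C}^1$. It is redundant if it changes the influence centrality of neither stubborn agent, and non-redundant otherwise. *)

(* Defs.v *)
From mathcomp Require Import all_boot all_order all_algebra.
Set Implicit Arguments. Unset Strict Implicit. Unset Printing Implicit Defensive.
Import Order.TTheory GRing.Theory Num.Theory.
Local Open Scope ring_scope.

Section FJ.
Variables (R : realFieldType) (n : nat).
Implicit Types (W : 'M[R]_n) (i j u v m s x : 'I_n).

(* edge (u,v) : information flows from u to v, i.e. w_vu > 0 *)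
Definition edge W : rel 'I_n := fun u v => 0 < W v u.

Definition row_stochastic W : Prop :=
  (forall i j, 0 <= W i j) /\ (forall i, \sum_(j < n) W i j = 1).

Definition strongly_connected W : Prop :=
  forall u v, exists p : seq 'I_n, path (edge W) u p /\ last u p = v.

(* a cycle other than a self-loop: a closed path through >= 2 distinct nodes *)
Definition is_cycle W (c : seq 'I_n) : Prop :=
  (2 <= size c)%N /\ uniq c /\ cycle (edge W) c.

Definition global_communicator W m : Prop :=
  forall c, is_cycle W c -> m \in c.

Definition type_C1 W : Prop :=
  strongly_connected W /\ exists m, global_communicator W m.

(* simple path from u to v, given as u :: p *)
Definition simple_path W u (p : seq 'I_n) v : Prop :=
  path (edge W) u p /\ last u p = v /\ uniq (u :: p).

Definition direct_path W m s j : Prop :=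
  exists p, simple_path W s p j /\ m \notin s :: p.

Definition all_paths_through W m x s : Prop :=
  forall p, simple_path W m p x -> s \in m :: p.

Definition base_class W m s1 s2 (k : nat) j : Prop :=
  match k with
  | 1 => direct_path W m s1 j /\ ~ direct_path W m s2 j
  | 2 => ~ direct_path W m s1 j /\ direct_path W m s2 j
  | 3 => direct_path W m s1 j /\ direct_path W m s2 j
  | 4 => ~ direct_path W m s1 j /\ ~ direct_path W m s2 j
  | _ => False
  end%N.

Definition inT W m s1 s2 (k : nat) j : Prop :=
  if j == s1 then k = 1%N
  else if j == s2 then
    (direct_path W m s1 s2 -> k = 3%N) /\ (~ direct_path W m s1 s2 -> k = 2%N)
  else if j == m then k = 3%N
  else base_class W m s1 s2 k j.

Definition beta_mx (beta : 'I_n -> R) : 'M[R]_n := diag_mx (\row_i beta i).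

Definition FJ_P W (beta : 'I_n -> R) : 'M[R]_n :=
  invmx (1%:M - (1%:M - beta_mx beta) *m W) *m beta_mx beta.

Definition influence_centrality W (beta : 'I_n -> R) (i : 'I_n) : R :=
  (\sum_(j < n) FJ_P W beta j i) / n%:R.

Definition modify W (a b d : 'I_n) (w : R) : 'M[R]_n :=
  \matrix_(i, j) (if i == b then
                    (if j == a then W i j + w
                     else if j == d then W i j - w else W i j)
                  else W i j).

End FJ.

(* Main.v *)
Require Import Defs.
From mathcomp Require Import all_boot all_order all_algebra.
From mathcomp Require Import ring lra.
From Stdlib Require Import Classical ClassicalEpsilon.
Set Implicit Arguments. Unset Strict Implicit. Unset Printing Implicit Defensive.
Import Order.TTheory GRing.Theory Num.Theory.
Local Open Scope ring_scope.

Section Aux.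
Variables (R : realFieldType) (n : nat).

Lemma path_back (W : 'M[R]_n) (S : 'I_n -> Prop) :
  (forall u y, S y -> 0 < W y u -> S u) ->
  forall u p, path (edge W) u p -> S (last u p) -> S u.
Proof.
move=> HS u p; elim: p u => [|y p IH] u //= /andP [Euy Hp] Hl.
exact: (HS u y (IH y Hp Hl) Euy).
Qed.

Lemma minP (W : 'M[R]_n) (c x : 'I_n -> R) (Q : pred 'I_n) (r : 'I_n) :
  (forall i j, 0 <= W i j) -> (forall i, \sum_j W i j = 1) ->
  strongly_connected W ->
  (forall i, Q i -> 0 <= c i <= 1) ->
  (forall i, Q i -> c i * (\sum_k W i k * x k) <= x i) ->
  (forall i k, Q i -> 0 < W i k -> Q k \/ 0 <= x k) ->
  (Q r -> x r < 0 -> c r < 1) ->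
  forall i, Q i -> 0 <= x i.
Proof.
move=> Wnn Wsum Hsc Hc Hsup Hcl Hr i0 Qi0.
have Wcase : forall y k, W y k = 0 \/ 0 < W y k.
  by move=> y k; have := Wnn y k; rewrite le0r => /orP [/eqP->|]; [left|right].
rewrite leNgt; apply/negP => xi0.
case: (@arg_minP _ R 'I_n i0 Q x Qi0) => j Qj Hmin.
set mu := x j.
have mu0 : mu < 0 by apply: le_lt_trans (Hmin _ Qi0) xi0.
have key : forall y, Q y -> x y = mu ->
   c y = 1 /\ (forall k, 0 < W y k -> Q k /\ x k = mu).
  move=> y Qy xy.
  have ge : forall k, 0 < W y k -> mu <= x k.
    move=> k Wk; case: (Hcl y k Qy Wk) => [Qk|xk]; first exact: Hmin.
    by apply: le_trans xk; apply: ltW.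
  have Hs : mu <= \sum_k W y k * x k.
    rewrite -[mu]mul1r -(Wsum y) mulr_suml; apply: ler_sum => k _.
    case: (Wcase y k) => [->|Wk]; first by rewrite !mul0r.
    by rewrite ler_pM2l // ge.
  have [c0 c1] := andP (Hc y Qy).
  have cy : c y = 1.
    apply/eqP; rewrite eq_le c1 /=.
    have : c y * mu <= mu.
      rewrite -{2}xy; apply: le_trans (Hsup y Qy); exact: ler_wpM2l.
    by rewrite -{2}[mu]mul1r ler_nM2r.
  split=> // k Wk.
  have Hs2 : \sum_k W y k * (x k - mu) = 0.
    apply/eqP; rewrite eq_le; apply/andP; split.
      under eq_bigr do rewrite mulrBr.
      rewrite sumrB -mulr_suml Wsum mul1r subr_le0.
      by have := Hsup y Qy; rewrite cy mul1r xy.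
    apply: sumr_ge0 => k' _.
    case: (Wcase y k') => [->|Wk']; first by rewrite mul0r.
    by rewrite mulr_ge0 ?Wnn // subr_ge0 ge.
  have Hk : forall k', true -> 0 <= W y k' * (x k' - mu).
    move=> k' _; case: (Wcase y k') => [->|Wk']; first by rewrite mul0r.
    by rewrite mulr_ge0 ?Wnn // subr_ge0 ge.
  have := @psumr_eq0P _ _ _ _ Hk Hs2 k isT.
  move=> /eqP; rewrite mulf_eq0 (gt_eqF Wk) /= subr_eq0 => /eqP xk.
  split=> //; case: (Hcl y k Qy Wk) => // xk0.
  by move: xk0; rewrite xk leNgt mu0.
have [p [Hp Hl]] := Hsc r j.
have Sr : (Q r /\ x r = mu).
  apply: (@path_back W (fun u => Q u /\ x u = mu) _ r p Hp); last by rewrite Hl.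
  by move=> u y [Qy xy] Wyu; have [_ /(_ u Wyu)] := key y Qy xy.
have [Qr xr] := Sr.
have [cr _] := key r Qr xr.
have := Hr Qr; rewrite xr cr ltxx => /(_ mu0) //.
Qed.
End Aux.


Section LA.
Variables (R : realFieldType) (n : nat).
Implicit Types (W : 'M[R]_n) (beta : 'I_n -> R).

Definition Mx W beta : 'M[R]_n := 1%:M - (1%:M - beta_mx beta) *m W.

Lemma mulM W beta p (X : 'M[R]_(n, p)) i j :
  (Mx W beta *m X) i j = X i j - (1 - beta i) * \sum_k W i k * X k j.
Proof.
rewrite /Mx mulmxBl mul1mx -mulmxA mulmxBl mul1mx /beta_mx mul_diag_mx.
rewrite !mxE mulrBl mul1r.
by [].
Qed.

Lemma hom0 W beta s (y : 'I_n -> R) :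
  (forall i j, 0 <= W i j) -> (forall i, \sum_j W i j = 1) ->
  strongly_connected W -> (forall i, 0 <= beta i <= 1) -> 0 < beta s ->
  (forall i, y i - (1 - beta i) * \sum_k W i k * y k = 0) ->
  forall i, y i = 0.
Proof.
move=> Wnn Wsum Hsc Hb Hs Hy.
have Hc : forall i, predT i -> 0 <= 1 - beta i <= 1.
  by move=> i _; have /andP[b0 b1] := Hb i; rewrite subr_ge0 b1 lerBlDr lerDl b0.
have Hr : predT s -> forall z : R, z < 0 -> 1 - beta s < 1.
  by move=> _ z _; rewrite ltrBlDr ltrDl.
move=> i; apply/eqP; rewrite eq_le; apply/andP; split.
  rewrite -oppr_ge0.
  apply: (@minP R n W (fun i => 1 - beta i) (fun i => - y i) predT s) => //.
  - move=> k _; rewrite -subr_ge0.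
    have -> : - y k - (1 - beta k) * \sum_k0 W k k0 * - y k0 = - (y k - (1 - beta k) * \sum_k0 W k k0 * y k0).
      rewrite opprB; under eq_bigr do rewrite mulrN; rewrite sumrN mulrN; by rewrite addrC opprK.
    by rewrite Hy oppr0.
  - by move=> ? ? _ _; left.
  - by move=> _; apply: Hr.
apply: (@minP R n W (fun i => 1 - beta i) y predT s) => //.
- by move=> k _; rewrite -subr_ge0 Hy.
- by move=> ? ? _ _; left.
- by move=> _; apply: Hr.
Qed.

Lemma unitM W beta s :
  (forall i j, 0 <= W i j) -> (forall i, \sum_j W i j = 1) ->
  strongly_connected W -> (forall i, 0 <= beta i <= 1) -> 0 < beta s ->
  Mx W beta \in unitmx.
Proof.
move=> Wnn Wsum Hsc Hb Hs.
rewrite -unitmx_tr -row_free_unit -kermx_eq0; apply/eqP.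
apply/row_matrixP => i; rewrite row0.
set v := row i _.
have Hv : v *m (Mx W beta)^T = 0 by rewrite /v -row_mul mulmx_ker row0.
have Hv2 : Mx W beta *m v^T = 0 by apply: trmx_inj; rewrite trmx_mul trmxK Hv trmx0.
apply/rowP => k.
have := @hom0 W beta s (fun k => v^T k 0) Wnn Wsum Hsc Hb Hs.
move=> H; have := H _ k; rewrite !mxE => -> // j.
by rewrite -mulM Hv2 mxE.
Qed.

Definition Pm W beta := invmx (Mx W beta) *m beta_mx beta.

Lemma Pm_eq W beta s (i j : 'I_n) :
  (forall i j, 0 <= W i j) -> (forall i, \sum_j W i j = 1) ->
  strongly_connected W -> (forall i, 0 <= beta i <= 1) -> 0 < beta s ->
  Pm W beta i j - (1 - beta i) * \sum_k W i k * Pm W beta k j = beta i *+ (i == j).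
Proof.
move=> Wnn Wsum Hsc Hb Hs.
rewrite -mulM /Pm mulmxA mulmxV ?mul1mx; last exact: (unitM Wnn Wsum Hsc Hb Hs).
by rewrite /beta_mx !mxE.
Qed.

End LA.


Section Pert.
Variables (R : realFieldType) (n : nat).
Implicit Types (W : 'M[R]_n) (beta : 'I_n -> R).

Lemma sum_modify W (a b d : 'I_n) w (x : 'I_n -> R) :
  a != d ->
  \sum_k modify W a b d w b k * x k = \sum_k W b k * x k + w * x a - w * x d.
Proof.
move=> ad.
have -> : \sum_k modify W a b d w b k * x k =
   \sum_k (W b k * x k + ((if k == a then w * x k else 0) - (if k == d then w * x k else 0))).
  apply: eq_bigr => k _; rewrite mxE eqxx.
  case: (eqVneq k a) => [->|ka]; first by rewrite (negbTE ad) mulrDl subr0.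
  case: (eqVneq k d) => [->|kd]; first by rewrite mulrBl sub0r.
  by rewrite subr0 addr0.
rewrite big_split /= sumrB -!big_mkcond /= !big_pred1_eq.
by rewrite addrA.
Qed.

Lemma modify_other W (a b d : 'I_n) w i k : i != b -> modify W a b d w i k = W i k.
Proof. by move=> ib; rewrite mxE (negbTE ib). Qed.

Definition IC W beta s := influence_centrality W beta s.

Lemma IC_E W beta s : IC W beta s = (\sum_j Pm W beta j s) / n%:R.
Proof. by []. Qed.

Variables (W : 'M[R]_n) (beta : 'I_n -> R) (a b d s : 'I_n) (w : R).
Hypotheses (Wnn : forall i j, 0 <= W i j) (Wsum : forall i, \sum_j W i j = 1)
  (Hsc : strongly_connected W)
  (W'nn : forall i j, 0 <= modify W a b d w i j)
  (W'sum : forall i, \sum_j modify W a b d w i j = 1)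
  (Hsc' : strongly_connected (modify W a b d w))
  (Hb : forall i, 0 <= beta i < 1) (r : 'I_n) (Hr : 0 < beta r)
  (ad : a != d) (w0 : 0 < w).

Let W' := modify W a b d w.
Let x := fun i => Pm W beta i s.
Let x' := fun i => Pm W' beta i s.
Let u := fun i => x' i - x i.
Let delta := (1 - beta b) * (w * x a - w * x d).

Lemma Hb1 i : 0 <= beta i <= 1.
Proof. by have /andP[h1 h2] := Hb i; rewrite h1 ltW. Qed.

Lemma u_eq i : u i - (1 - beta i) * \sum_k W' i k * u k = (i == b)%:R * delta.
Proof.
have E' := @Pm_eq R n W' beta r i s W'nn W'sum Hsc' Hb1 Hr.
have E := @Pm_eq R n W beta r i s Wnn Wsum Hsc Hb1 Hr.
have -> : \sum_k W' i k * u k = \sum_k W' i k * x' k - \sum_k W' i k * x k.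
  by rewrite -sumrB; apply: eq_bigr => k _; rewrite mulrBr.
have D : \sum_k W' i k * x k = \sum_k W i k * x k + (i == b)%:R * (w * x a - w * x d).
  case: (eqVneq i b) => [->|ib].
    by rewrite /W' sum_modify // mul1r addrA.
  rewrite mul0r addr0; apply: eq_bigr => k _; by rewrite /W' modify_other.
rewrite D /u /delta.
move: E E' D; rewrite -/W' -/(x i) -/(x' i).
move=> E E' _.
move: E E'.
move: (x i) (x' i) (\sum_k W i k * x k) (\sum_k W' i k * x' k) (beta i *+ (i == s)) => A A' S S' T E E'.
have -> : A' - A - (1 - beta i) * (S' - (S + (i == b)%:R * (w * x a - w * x d))) =
       (A' - (1 - beta i) * S') - (A - (1 - beta i) * S) + (i == b)%:R * ((1 - beta i) * (w * x a - w * x d)) by ring.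
rewrite E E' subrr add0r.
by case: (eqVneq i b) => [->|_]; rewrite ?mul0r.
Qed.

Lemma Hc i : predT i -> 0 <= 1 - beta i <= 1.
Proof. by move=> _; have /andP[b0 b1] := Hb1 i; rewrite subr_ge0 b1 lerBlDr lerDl b0. Qed.

Lemma u_nonneg : 0 <= delta -> forall i, 0 <= u i.
Proof.
move=> d0 i.
apply: (@minP R n W' (fun i => 1 - beta i) u predT r) => //.
- exact: Hc.
- by move=> k _; rewrite -subr_ge0 u_eq mulr_ge0 ?ler0n.
- by move=> ? ? _ _; left.
- by move=> _ _; rewrite ltrBlDr ltrDl.
Qed.

Lemma u_zero : delta = 0 -> forall i, u i = 0.
Proof.
move=> d0; apply: (@hom0 R n W' beta r u W'nn W'sum Hsc' Hb1 Hr).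
by move=> i; rewrite u_eq d0 mulr0.
Qed.

Lemma IC_diff : IC W' beta s - IC W beta s = (\sum_j u j) / n%:R.
Proof. by rewrite !IC_E -mulrBl -sumrB. Qed.

Lemma n_pos : (0 < n)%N.
Proof. by case: n s => // -[]. Qed.

Lemma IC_incr : x d < x a -> IC W beta s < IC W' beta s.
Proof.
move=> xda.
have dpos : 0 < delta.
  rewrite /delta mulr_gt0 //; first by have /andP[_ b1] := Hb b; rewrite subr_gt0.
  by rewrite -mulrBr mulr_gt0 // subr_gt0.
have un := u_nonneg (ltW dpos).
have ub : delta <= u b.
  have := u_eq b; rewrite eqxx mul1r => <-.
  rewrite lerBlDr lerDl mulr_ge0 //; first by have /andP[] := @Hc b isT.
  by apply: sumr_ge0 => k _; rewrite mulr_ge0.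
rewrite -subr_gt0 IC_diff divr_gt0 ?ltr0n ?n_pos //.
rewrite (bigD1 b) //= ltr_pwDl //; first by apply: lt_le_trans ub.
by apply: sumr_ge0.
Qed.

Lemma IC_same : x a = x d -> IC W' beta s = IC W beta s.
Proof.
move=> xad; apply/eqP; rewrite -subr_eq0 IC_diff.
have dz : delta = 0 by rewrite /delta xad subrr mulr0.
by rewrite big1 ?mul0r // => i _; apply: u_zero.
Qed.

End Pert.


Section Graph.
Variables (R : realFieldType) (n : nat) (W : 'M[R]_n).

Lemma sp_prefix u p v x : simple_path W u p v -> x \in u :: p ->
  exists p', simple_path W u p' x /\ {subset u :: p' <= u :: p}.
Proof.
move=> [Hp [Hl Hu]]; rewrite in_cons => /orP [/eqP->|xp].
  exists [::]; split; first by split.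
  by move=> y; rewrite !inE => /eqP->; rewrite eqxx.
case/splitPr: xp Hp Hl Hu => p1 p2 Hp Hl Hu.
exists (rcons p1 x); split.
  split; first by move: Hp; rewrite cat_path rcons_path /= => /and3P[-> -> _].
  split; first by rewrite last_rcons.
  move: Hu; rewrite -cat_cons -cats1 -cat_cons !cat_uniq /= => /and3P[-> /norP[xn _] _].
  by rewrite (negbTE xn).
move=> y; rewrite -cats1 -cat_cons -cat_cons !mem_cat !inE.
by case/orP => [->|/eqP->]; rewrite ?eqxx ?orbT.
Qed.

Lemma sp_extend u p v y : simple_path W u p v -> 0 < W y v ->
  exists p', simple_path W u p' y /\ {subset u :: p' <= y :: u :: p}.
Proof.
move=> Hs Wyv.
case: (boolP (y \in u :: p)) => yin.
  have [p' [H1 H2]] := sp_prefix Hs yin.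
  by exists p'; split => // z /H2 zin; rewrite in_cons zin orbT.
move: Hs => [Hp [Hl Hu]].
exists (rcons p y); split.
  split; first by rewrite rcons_path Hp Hl /edge Wyv.
  split; first by rewrite last_rcons.
  by rewrite -rcons_cons rcons_uniq yin Hu.
move=> z; rewrite -rcons_cons mem_rcons !inE.
by case/orP => [->|/orP[->|->]]; rewrite ?orbT.
Qed.

Lemma direct_extend m s k i : direct_path W m s k -> 0 < W i k -> i != m ->
  direct_path W m s i.
Proof.
move=> [p [Hs Hm]] Wik im.
have [p' [H1 H2]] := sp_extend Hs Wik.
exists p'; split => //; apply/negP => /H2; rewrite in_cons eq_sym (negbTE im) /=.
by apply/negP.
Qed.

Lemma apt_back m i k s : all_paths_through W m i s -> i != s -> 0 < W i k ->
  all_paths_through W m k s.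
Proof.
move=> Ha iNs Wik p Hs.
have [p' [H1 H2]] := sp_extend Hs Wik.
have := H2 _ (Ha _ H1); rewrite in_cons eq_sym (negbTE iNs) /=.
by [].
Qed.

Lemma direct_refl m s : s != m -> direct_path W m s s.
Proof.
move=> sm; exists [::]; split; first by split.
by rewrite inE eq_sym.
Qed.

Lemma apt_self m s : all_paths_through W m m s -> s = m.
Proof.
move=> H; have : s \in [:: m] by apply: H; split.
by rewrite inE => /eqP.
Qed.

End Graph.


Definition pb (P : Prop) : bool := if excluded_middle_informative P then true else false.
Lemma pbP (P : Prop) : reflect P (pb P).
Proof. by rewrite /pb; case: excluded_middle_informative => h; constructor. Qed.

Section Claims.
Variables (R : realFieldType) (n : nat) (W : 'M[R]_n).
Hypotheses (Wnn : forall i j, 0 <= W i j) (Wsum : forall i, \sum_j W i j = 1)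
  (Hsc : strongly_connected W).

Lemma sumW_subc (x : 'I_n -> R) K i : \sum_k W i k * (x k - K) = \sum_k W i k * x k - K.
Proof.
under eq_bigr do rewrite mulrBr.
by rewrite sumrB -mulr_suml Wsum mul1r.
Qed.

Lemma sumW_csub (x : 'I_n -> R) K i : \sum_k W i k * (K - x k) = K - \sum_k W i k * x k.
Proof.
under eq_bigr do rewrite mulrBr.
by rewrite sumrB -mulr_suml Wsum mul1r.
Qed.

Lemma local_ge (x : 'I_n -> R) K (Q : pred 'I_n) r :
  (forall i, Q i -> \sum_k W i k * x k <= x i) ->
  (forall i k, Q i -> 0 < W i k -> Q k \/ K <= x k) -> ~~ Q r ->
  forall i, Q i -> K <= x i.
Proof.
move=> Hs Hc Hr i Qi; rewrite -subr_ge0.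
apply: (@minP R n W (fun _ => 1) (fun i => x i - K) Q r) => //.
- by move=> ? _; rewrite ler01 lexx.
- by move=> k Qk; rewrite mul1r sumW_subc lerD2r Hs.
- by move=> k k' Qk Wk; case: (Hc k k' Qk Wk) => [->|h]; [left|right; rewrite subr_ge0].
- by move=> Qr; move: Hr; rewrite Qr.
Qed.

Lemma local_le (x : 'I_n -> R) K (Q : pred 'I_n) r :
  (forall i, Q i -> x i <= \sum_k W i k * x k) ->
  (forall i k, Q i -> 0 < W i k -> Q k \/ x k <= K) -> ~~ Q r ->
  forall i, Q i -> x i <= K.
Proof.
move=> Hs Hc Hr i Qi; rewrite -subr_ge0.
apply: (@minP R n W (fun _ => 1) (fun i => K - x i) Q r) => //.
- by move=> ? _; rewrite ler01 lexx.
- by move=> k Qk; rewrite mul1r sumW_csub lerD2l lerN2 Hs.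
- by move=> k k' Qk Wk; case: (Hc k k' Qk Wk) => [->|h]; [left|right; rewrite subr_ge0].
- by move=> Qr; move: Hr; rewrite Qr.
Qed.

Variables (beta : 'I_n -> R) (s s' m : 'I_n) (x : 'I_n -> R).
Hypotheses (Hb : forall i, 0 <= beta i < 1) (Hbs : 0 < beta s)
  (Hb0 : forall i, i != s -> i != s' -> beta i = 0)
  (Hx : forall i, x i - (1 - beta i) * \sum_k W i k * x k = beta i *+ (i == s)).

Lemma x_harm i : i != s -> x i = (1 - beta i) * \sum_k W i k * x k.
Proof. by move=> iNs; apply/eqP; rewrite -subr_eq0 Hx (negbTE iNs). Qed.

Lemma x_harm0 i : i != s -> i != s' -> x i = \sum_k W i k * x k.
Proof. by move=> iNs iNs2; rewrite x_harm // Hb0 // subr0 mul1r. Qed.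

Lemma C_nonneg i : 0 <= x i.
Proof.
apply: (@minP R n W (fun i => 1 - beta i) x predT s) => //.
- by move=> k _; have /andP[b0 b1] := Hb k; rewrite subr_ge0 (ltW b1) lerBlDr lerDl b0.
- by move=> k _; rewrite -subr_ge0 Hx mulrn_wge0 // ; have /andP[] := Hb k.
- by move=> ? ? _ _; left.
- by move=> _ _; rewrite ltrBlDr ltrDl.
Qed.

Lemma sumWx_ge0 i : 0 <= \sum_k W i k * x k.
Proof. by apply: sumr_ge0 => k _; rewrite mulr_ge0 ?C_nonneg. Qed.

Lemma x_sub i : i != s -> x i <= \sum_k W i k * x k.
Proof.
move=> iNs; rewrite x_harm // -{2}[\sum_k _]mul1r ler_wpM2r ?sumWx_ge0 //.
by rewrite lerBlDr lerDl; have /andP[] := Hb i.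
Qed.

Lemma C_max j : x j <= x s.
Proof.
case: (eqVneq j s) => [->|js]; first by [].
apply: (@local_le x (x s) [pred i | i != s] s) => //.
- by move=> i; apply: x_sub.
- by move=> i k _ _; case: (eqVneq k s) => [->|ks]; [right|left].
- by rewrite /= eqxx.
Qed.

Lemma C_top a : a != s -> a != m -> ~ direct_path W m s' a ->
  all_paths_through W m a s -> x s <= x a.
Proof.
move=> aNs am nd ap.
pose Q := [pred j | [&& j != s, pb (all_paths_through W m j s) & ~~ pb (direct_path W m s' j)]].
have Qm : forall j, Q j -> j != m.
  move=> j /and3P[js /pbP apj _]; apply/eqP => jm; rewrite jm in js apj.
  by move: js; rewrite (apt_self apj) eqxx.
apply: (@local_ge x (x s) Q m) => //.
- move=> i Qi; rewrite (@x_harm0 i) //; first by case/and3P: Qi.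
  have im := Qm _ Qi.
  apply/eqP => is'; case/and3P: Qi => _ _ /pbP; apply.
  by rewrite is'; apply: direct_refl; rewrite -is'.
- move=> i k Qi Wik; case: (eqVneq k s) => [->|ks]; [by right|left].
  have [iNs /pbP apj /pbP ndi] := and3P Qi.
  rewrite /Q /= ks /=; apply/andP; split; first by apply/pbP; exact: apt_back apj iNs Wik.
  apply/pbP => dk; apply: ndi; exact: direct_extend dk Wik (Qm _ Qi).
- by apply/negP => /Qm; rewrite eqxx.
- by apply/and3P; split => //; [apply/pbP | apply/negP => /pbP].
Qed.

Lemma C_T4 a : a != m -> ~ direct_path W m s a -> ~ direct_path W m s' a -> x m <= x a.
Proof.
move=> am n1 n2.
pose Q := [pred j | [&& j != m, ~~ pb (direct_path W m s j) & ~~ pb (direct_path W m s' j)]].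
apply: (@local_ge x (x m) Q m) => //.
- move=> i /and3P[im /pbP d1 /pbP d2]; rewrite (@x_harm0 i) //.
    by apply/eqP => e; apply: d1; rewrite e; apply: direct_refl; rewrite -e.
  by apply/eqP => e; apply: d2; rewrite e; apply: direct_refl; rewrite -e.
- move=> i k /and3P[im /pbP d1 /pbP d2] Wik; case: (eqVneq k m) => [->|km]; [by right|left].
  rewrite /Q /= km /=; apply/andP; split; apply/pbP => dk.
    by apply: d1; exact: direct_extend dk Wik im.
  by apply: d2; exact: direct_extend dk Wik im.
- by rewrite /Q /= eqxx.
- by apply/and3P; split => //; apply/negP => /pbP.
Qed.

Lemma C_T' d : d != m -> ~ direct_path W m s d -> x d <= x m.
Proof.
move=> dm n1.
pose Q := [pred j | (j != m) && ~~ pb (direct_path W m s j)].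
apply: (@local_le x (x m) Q m) => //.
- move=> i /andP[im /pbP d1]; apply: x_sub.
  by apply/eqP => e; apply: d1; rewrite e; apply: direct_refl; rewrite -e.
- move=> i k /andP[im /pbP d1] Wik; case: (eqVneq k m) => [->|km]; [by right|left].
  rewrite /Q /= km /=; apply/pbP => dk.
  by apply: d1; exact: direct_extend dk Wik im.
- by rewrite /Q /= eqxx.
- by apply/andP; split => //; apply/negP => /pbP.
Qed.

End Claims.


Section T.
Variables (R : realFieldType) (n : nat) (W : 'M[R]_n) (m s1 s2 : 'I_n).

Lemma inT1 j : inT W m s1 s2 1 j ->
  j = s1 \/ [/\ j != s1, j != s2, j != m & ~ direct_path W m s2 j].
Proof.
rewrite /inT; case: (eqVneq j s1) => [->|js1]; first by left.
case: (eqVneq j s2) => [_|js2].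
  by move=> [h1 h2]; exfalso; case: (classic (direct_path W m s1 s2)) => c; [have := h1 c|have := h2 c].
case: (eqVneq j m) => [_|jm] //.
by move=> [_ H]; right; split.
Qed.

Lemma inT2 j : inT W m s1 s2 2 j ->
  j != s1 /\ ((j = s2 /\ ~ direct_path W m s1 s2) \/ [/\ j != s2, j != m & ~ direct_path W m s1 j]).
Proof.
rewrite /inT; case: (eqVneq j s1) => [//|js1].
case: (eqVneq j s2) => [->|js2].
  move=> [h1 h2]; split => //; left; split => // c; by have := h1 c.
case: (eqVneq j m) => [_|jm] //.
by move=> [H _]; split => //; right; split.
Qed.

Lemma inT4 j : inT W m s1 s2 4 j ->
  [/\ j != s1, j != s2, j != m, ~ direct_path W m s1 j & ~ direct_path W m s2 j].
Proof.
rewrite /inT; case: (eqVneq j s1) => [//|js1].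
case: (eqVneq j s2) => [_|js2].
  by move=> [h1 h2]; exfalso; case: (classic (direct_path W m s1 s2)) => c; [have := h1 c|have := h2 c].
case: (eqVneq j m) => [_|jm] //.
by move=> [H1 H2]; split.
Qed.
End T.

Unset Implicit Arguments.
Set Strict Implicit.

Theorem theorem2 (R : realFieldType) (n : nat) (W : 'M[R]_n)
  (beta : 'I_n -> R) (s1 s2 m a b d : 'I_n) (w : R) :
  row_stochastic W ->
  type_C1 W ->
  s1 != s2 ->
  0 < beta s1 < 1 -> 0 < beta s2 < 1 ->
  (forall i, i != s1 -> i != s2 -> beta i = 0) ->
  global_communicator W m ->
  (* edge modification (a,b,d) *)
  a != b -> b != d -> a != d ->
  0 < W b d -> 0 < w < W b d ->
  (* permissible *)
  type_C1 (modify W a b d w) ->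
  (* non-redundant *)
  (influence_centrality (modify W a b d w) beta s1 != influence_centrality W beta s1
   \/ influence_centrality (modify W a b d w) beta s2 != influence_centrality W beta s2) ->
  ((((inT W m s1 s2 1 a /\ all_paths_through W m a s1)
      /\ ~ (inT W m s1 s2 1 d /\ all_paths_through W m d s1))
    \/ (inT W m s1 s2 4 a /\ inT W m s1 s2 2 d)) ->
   influence_centrality W beta s1 < influence_centrality (modify W a b d w) beta s1)
  /\
  ((((inT W m s1 s2 2 a /\ all_paths_through W m a s2)
      /\ ~ (inT W m s1 s2 2 d /\ all_paths_through W m d s2))
    \/ (inT W m s1 s2 4 a /\ inT W m s1 s2 1 d)) ->
   influence_centrality W beta s2 < influence_centrality (modify W a b d w) beta s2).
Proof.
move=> [Wnn Wsum] [Hsc _] s12 /andP[b1p b1l] /andP[b2p b2l] Hb0 _ ab bd ad Wbd0 /andP[w0 wW]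
  [Hsc' _] Hnr.
have Hb : forall i, 0 <= beta i < 1.
  move=> i; case: (eqVneq i s1) => [->|is1]; first by rewrite ltW.
  case: (eqVneq i s2) => [->|is2]; first by rewrite ltW.
  by rewrite Hb0 // lexx ltr01.
have Hb1 : forall i, 0 <= beta i <= 1.
  by move=> i; have /andP[h1 h2] := Hb i; rewrite h1 ltW.
have Hb0' : forall i, i != s2 -> i != s1 -> beta i = 0 by move=> i h1 h2; apply: Hb0.
have W'nn : forall i j, 0 <= modify W a b d w i j.
  move=> i j; rewrite mxE; case: (eqVneq i b) => [->|_]; last exact: Wnn.
  case: (eqVneq j a) => [->|_]; first by rewrite addr_ge0 ?Wnn ?ltW.
  case: (eqVneq j d) => [->|_]; last exact: Wnn.
  by rewrite subr_ge0 ltW.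
have W'sum : forall i, \sum_j modify W a b d w i j = 1.
  move=> i; case: (eqVneq i b) => [->|ib].
    have -> : \sum_j modify W a b d w b j = \sum_j modify W a b d w b j * (fun _ => 1) j.
      by apply: eq_bigr => j _; rewrite mulr1.
    rewrite sum_modify //=.
    have -> : \sum_k W b k * 1 = \sum_k W b k by apply: eq_bigr => k _; rewrite mulr1.
    by rewrite Wsum mulr1 addrK.
  by rewrite -(Wsum i); apply: eq_bigr => j _; rewrite modify_other.
pose h := fun i => Pm W beta i s1.
pose g := fun i => Pm W beta i s2.
have hx : forall i, h i - (1 - beta i) * \sum_k W i k * h k = beta i *+ (i == s1).
  by move=> i; apply: (Pm_eq i s1 Wnn Wsum Hsc Hb1 b1p).
have gx : forall i, g i - (1 - beta i) * \sum_k W i k * g k = beta i *+ (i == s2).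
  by move=> i; apply: (Pm_eq i s2 Wnn Wsum Hsc Hb1 b1p).
have hg : forall i, g i = 1 - h i.
  have y0 := @hom0 R n W beta s1 (fun i => 1 - h i - g i) Wnn Wsum Hsc Hb1 b1p.
  move=> i; have -> : g i = 1 - h i - (1 - h i - g i) by ring.
  rewrite y0 ?subr0 // => k.
  have -> : \sum_k0 W k k0 * (1 - h k0 - g k0) = 1 - \sum_k0 W k k0 * h k0 - \sum_k0 W k k0 * g k0.
    rewrite (eq_bigr (fun k0 => W k k0 - W k k0 * h k0 - W k k0 * g k0)); last by move=> j _; rewrite !mulrBr mulr1.
    by rewrite !sumrB Wsum.
  have E1 := hx k; have E2 := gx k.
  have -> : 1 - h k - g k - (1 - beta k) * (1 - \sum_k0 W k k0 * h k0 - \sum_k0 W k k0 * g k0)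
     = beta k - (h k - (1 - beta k) * \sum_k0 W k k0 * h k0) - (g k - (1 - beta k) * \sum_k0 W k k0 * g k0) by ring.
  rewrite E1 E2.
  case: (eqVneq k s1) => [->|ks1]; first by rewrite (negbTE s12) /= subr0 subrr.
  case: (eqVneq k s2) => [->|ks2]; first by rewrite subr0 subrr.
  by rewrite Hb0 // !subr0.
have nd : h a != h d.
  apply/eqP => e.
  have e2 : g a = g d by rewrite !hg e.
  case: Hnr => /eqP; apply.
  - exact: (IC_same Wnn Wsum Hsc W'nn W'sum Hsc' Hb b1p ad e).
  - exact: (IC_same Wnn Wsum Hsc W'nn W'sum Hsc' Hb b1p ad e2).
have nd2 : g a != g d by rewrite !hg; apply: contra nd => /eqP e; apply/eqP; apply: oppr_inj; exact: (addrI 1 e).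
have incr1 : h d <= h a -> influence_centrality W beta s1 < influence_centrality (modify W a b d w) beta s1.
  move=> le; apply: (IC_incr Wnn Wsum Hsc W'nn W'sum Hsc' Hb b1p ad w0).
  by rewrite lt_neqAle le eq_sym nd.
have incr2 : g d <= g a -> influence_centrality W beta s2 < influence_centrality (modify W a b d w) beta s2.
  move=> le; apply: (IC_incr Wnn Wsum Hsc W'nn W'sum Hsc' Hb b1p ad w0).
  by rewrite lt_neqAle le eq_sym nd2.
split.
  case => [[[T1a apa] _] | [T4a T2d]]; apply: incr1.
    case: (inT1 T1a) => [->|[as1 as2 am nda]]; first exact: (C_max Wnn Wsum Hsc Hb b1p hx).
    exact: le_trans (C_max Wnn Wsum Hsc Hb b1p hx d) (C_top Wnn Wsum Hsc Hb0 hx as1 am nda apa).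
  have [as1 as2 am n1 n2] := inT4 T4a.
  have Ha := C_T4 Wnn Wsum Hsc Hb0 hx am n1 n2.
  apply: le_trans Ha.
  case: (inT2 T2d) => [ds1 [[-> n12] | [ds2 dm nd1]]].
    case: (eqVneq s2 m) => [->|s2m] //.
    exact: (C_T' Wnn Wsum Hsc Hb b1p hx s2m n12).
  exact: (C_T' Wnn Wsum Hsc Hb b1p hx dm nd1).
case => [[[T2a apa] _] | [T4a T1d]]; apply: incr2.
  case: (inT2 T2a) => [as1 [[-> _] | [as2 am nda]]]; first exact: (C_max Wnn Wsum Hsc Hb b2p gx).
  exact: le_trans (C_max Wnn Wsum Hsc Hb b2p gx d) (C_top Wnn Wsum Hsc Hb0' gx as2 am nda apa).
have [as1 as2 am n1 n2] := inT4 T4a.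
have Ha := C_T4 Wnn Wsum Hsc Hb0' gx am n2 n1.
case: (inT1 T1d) => [->|[ds1 ds2 dm nd1]].
  by rewrite !hg lerD2l lerN2 (C_max Wnn Wsum Hsc Hb b1p hx).
exact: le_trans (C_T' Wnn Wsum Hsc Hb b2p gx dm nd1) Ha.
Qed.
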